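(* For all integers $i,j,\ell$, $$\mathcal P_i(s)\mathcal P_{\ell+j}(s)-\mathcal P_j(s)\mathcal P_{\ell+i}(s)=(s^2-s+1)^{3j}\mathcal P_{i-j}(s)\mathcal P_\ell(s)$$ and $$\mathcal P_i(s)\mathcal Q_{\ell+j}(s)-\mathcal P_j(s)\mathcal Q_{\ell+i}(s)=(s^2-s+1)^{3j}\mathcal P_{i-j}(s)\mathcal Q_\ell(s).$$
   Context: Let $\mathbb F$ be a field of characteristic different from $3$ containing a primitive cube root of unity $\zeta_3$. For $i\in\mathbb Z$ define the rational functions in $\mathbb F(s)$ $$\mathcal P_i(s)=\frac{(s+\zeta_3)^{3i}-(s+\zeta_3^2)^{3i}}{3(\zeta_3-\zeta_3^2)s(s-1)},\qquad \mathcal Q_i(s)=\frac{\frac{1-\zeta_3}{3}(s+\zeta_3)^{3i-1}+\frac{1-\zeta_3^2}{3}(s+\zeta_3^2)^{3i-1}}{s-1}.$$ *)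

(* Defs.v *)
From HB Require Import structures.
From mathcomp Require Import all_boot all_order all_algebra.
Set Implicit Arguments. Unset Strict Implicit. Unset Printing Implicit Defensive.
Import Order.TTheory GRing.Theory Num.Theory.
Local Open Scope ring_scope.

Notation ratfun F := {fraction {poly F}}.

Definition svar (F : fieldType) : ratfun F := tofrac 'X.

Definition cst (F : fieldType) (a : F) : ratfun F := tofrac a%:P.

Definition Pfun (F : fieldType) (z : F) (i : int) : ratfun F :=
  let s := svar F in
  ((s + cst z) ^ (3 * i) - (s + cst (z ^+ 2)) ^ (3 * i))
  / (3%:R * (cst z - cst (z ^+ 2)) * s * (s - 1)).

Definition Qfun (F : fieldType) (z : F) (i : int) : ratfun F :=
  let s := svar F in
  (cst ((1 - z) / 3%:R) * (s + cst z) ^ (3 * i - 1)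
   + cst ((1 - z ^+ 2) / 3%:R) * (s + cst (z ^+ 2)) ^ (3 * i - 1))
  / (s - 1).

(* Main.v *)
Require Import Defs.
From HB Require Import structures.
From mathcomp Require Import all_boot all_order all_algebra.
From mathcomp Require Import ring.
Import Order.TTheory GRing.Theory Num.Theory.
Local Open Scope ring_scope.

Lemma genP (K : fieldType) (A B : K) (i j l : int) : A != 0 -> B != 0 ->
 (A^i - B^i)*(A^(l+j) - B^(l+j)) - (A^j - B^j)*(A^(l+i)-B^(l+i))
 = (A*B)^j * (A^(i-j) - B^(i-j)) * (A^l - B^l).
Proof.
move=> hA hB; have uA : A \is a GRing.unit by rewrite unitfE.
have uB : B \is a GRing.unit by rewrite unitfE.
rewrite exprzMl // !exprzDr // -!invr_expz.
have := expfz_neq0 j hA; have := expfz_neq0 j hB.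
move: (A^i) (A^j) (A^l) (B^i) (B^j) (B^l) => ai aj al bi bj bl h1 h2.
by field; rewrite h1 h2.
Qed.

Lemma genQ (K : fieldType) (A B x y : K) (i j l : int) : A != 0 -> B != 0 ->
 (A^i - B^i)*(x*A^(l+j) + y*B^(l+j)) - (A^j - B^j)*(x*A^(l+i)+y*B^(l+i))
 = (A*B)^j * (A^(i-j) - B^(i-j)) * (x*A^l + y*B^l).
Proof.
move=> hA hB; have uA : A \is a GRing.unit by rewrite unitfE.
have uB : B \is a GRing.unit by rewrite unitfE.
rewrite exprzMl // !exprzDr // -!invr_expz.
have := expfz_neq0 j hA; have := expfz_neq0 j hB.
move: (A^i) (A^j) (A^l) (B^i) (B^j) (B^l) => ai aj al bi bj bl h1 h2.
by field; rewrite h1 h2.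
Qed.

Lemma key (K : fieldType) (a b c D E x y : K) (P Q : int -> K) (i j l : int) :
  a != 0 -> b != 0 -> c ^+ 3 = a ^+ 3 * b ^+ 3 ->
  (forall k, P k = (a ^ (3 * k) - b ^ (3 * k)) / D) ->
  (forall k, Q k = (x * a ^ (3 * k - 1) + y * b ^ (3 * k - 1)) / E) ->
  P i * P (l + j) - P j * P (l + i) = c ^ (3 * j) * P (i - j) * P l /\
  P i * Q (l + j) - P j * Q (l + i) = c ^ (3 * j) * P (i - j) * Q l.
Proof.
move=> ha hb hc hP hQ; rewrite !hP !hQ.
have ua : a \is a GRing.unit by rewrite unitfE.
have ub : b \is a GRing.unit by rewrite unitfE.
rewrite !exprzDr // -!(exprz_exp _ 3).
have -> : c ^ 3 = a ^ 3 * b ^ 3 by exact: hc.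
have hA : a ^ 3 != 0 by rewrite expfz_neq0.
have hB : b ^ 3 != 0 by rewrite expfz_neq0.
move: (a ^ 3) (b ^ 3) hA hB => A B hA hB.
split.
  transitivity (((A^i - B^i)*(A^(l+j) - B^(l+j)) - (A^j - B^j)*(A^(l+i)-B^(l+i))) / D / D).
    ring.
  rewrite genP //; ring.
transitivity (((A^i - B^i)*((x * a ^ (-1))*A^(l+j) + (y * b^(-1))*B^(l+j))
   - (A^j - B^j)*((x * a ^ (-1))*A^(l+i)+(y * b^(-1))*B^(l+i))) / D / E).
  ring.
rewrite genQ //; ring.
Qed.

Theorem lemma3p4 (F : fieldType) (z : F)
  (hchar : 3%N \notin [pchar F]) (hz : 3.-primitive_root z)
  (i j l : int) :
  let s := svar F in
  Pfun z i * Pfun z (l + j) - Pfun z j * Pfun z (l + i)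
    = (s ^+ 2 - s + 1) ^ (3 * j) * Pfun z (i - j) * Pfun z l
  /\
  Pfun z i * Qfun z (l + j) - Pfun z j * Qfun z (l + i)
    = (s ^+ 2 - s + 1) ^ (3 * j) * Pfun z (i - j) * Qfun z l.
Proof.
move=> s.
have z3 : z ^+ 3 = 1 by exact: prim_expr_order.
have z1 : z != 1.
  apply/eqP => e; have := prim_order_dvd hz 1; rewrite expr1 e eqxx //.
have z2 : z ^+ 2 + z + 1 = 0.
  have e : (z - 1) * (z ^+ 2 + z + 1) = z ^+ 3 - 1 by ring.
  have : (z - 1) * (z ^+ 2 + z + 1) == 0 by rewrite e z3 subrr.
  by rewrite mulf_eq0 subr_eq0 (negbTE z1) => /eqP.
have nz c : s + cst c != 0.
  rewrite /s /svar /cst -tofracD tofrac_eq0; exact: monic_neq0 (monicXaddC c).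
have e1 : cst z * cst (z ^+ 2) = 1.
  by rewrite /cst -tofracM -polyCM -exprS z3.
have e2 : cst z + cst (z ^+ 2) = -1.
  rewrite /cst -tofracD -polyCD.
  have -> : z + z ^+ 2 = -1 by rewrite -(subr0 (z + z ^+ 2)) -z2; ring.
  by rewrite polyCN polyC1 tofracN tofrac1.
have hc : (s ^+ 2 - s + 1) ^+ 3 = (s + cst z) ^+ 3 * (s + cst (z ^+ 2)) ^+ 3.
  rewrite -exprMn; congr (_ ^+ 3).
  move: (cst z) (cst (z ^+ 2)) e1 e2 => u v e1 e2.
  transitivity (s ^+ 2 + (u + v) * s + u * v); first by rewrite e1 e2; ring.
  ring.
apply: (@key _ (s + cst z) (s + cst (z ^+ 2)) (s ^+ 2 - s + 1) _ _ _ _ (Pfun z) (Qfun z) i j l (nz z) (nz _) hc) => k //.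
Qed.
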